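(* Let $x\in\mathbb R^N$ be a vector with block structure $\mathcal B=(\mathcal B_1,\dots,\mathcal B_B)$ and let $\omega=(\omega_1,\dots,\omega_B)$ be weights with $\omega_b\ge 1$. Let $s>\|\omega\|_\infty^2$. Then for $q<p\le 2$ and any norm $\|\cdot\|_r$ used on the blocks, $$\sigma_s(x)_{r,p}^{(\omega)}\le \widetilde\sigma_s(x)_{r,p}^{(\omega)}\le (s-\|\omega\|_\infty^2)^{\frac1p-\frac1q}\,\|x\|_{r,q}^{(\omega)}.$$
   Context: Block structure: $\mathcal B=(\mathcal B_1,\dots,\mathcal B_B)$ is a partition of $\{1,\dots,N\}$; for $x\in\mathbb R^N$, $x[b]=x[\mathcal B_b]$ is the restriction of $x$ to block $b$; for $S\subseteq\{1,\dots,B\}$, $x[S]$ is the vector equal to $x$ on the blocks indexed by $S$ and $0$ elsewhere. Weights $\omega_b\ge1$, $\|\omega\|_\infty=\max_b\omega_b$, $\omega(S)=\sum_{b\in S}\omega_b^2$. For $p>0$ and a block norm $\|\cdot\|_r$: $\|x\|_{r,p}^{(\omega)}=\big(\sum_{b}\omega_b^{2-p}\|x[b]\|_r^p\big)^{1/p}$. Weighted block sparsity: $\|x\|_0^{(\omega)}=\omega(\{b:x[b]\neq0\})$. Best weighted $s$-block approximation error: $\sigma_s(x)_{r,p}^{(\omega)}=\inf\{\|x-z\|_{r,p}^{(\omega)}:\|z\|_0^{(\omega)}\le s\}$. Quasi-best approximation: let $\pi$ be a permutation of $\{1,\dots,B\}$ with $\|x[\pi(1)]\|_r/\omega_{\pi(1)}\ge\|x[\pi(2)]\|_r/\omega_{\pi(2)}\ge\cdots$;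 for $s\ge\|\omega\|_\infty^2$ let $k_s=\max\{k:\sum_{i=1}^k\omega_{\pi(i)}^2\le s\}$, $S=\{\pi(1),\dots,\pi(k_s)\}$, and $\widetilde\sigma_s(x)_{r,p}^{(\omega)}=\|x-x[S]\|_{r,p}^{(\omega)}$. *)

(* Defs.v *)
From Stdlib Require Import Reals Lra Lia List Permutation Classical ClassicalEpsilon.
Import ListNotations.
Open Scope R_scope.

(* Coordinates are indexed by nat; a vector of R^N is x : nat -> R, only
   the coordinates i < N are meaningful.  A block structure with B blocks is
   given by blk : nat -> nat, coordinate i (i < N) lying in block blk i. *)

Definition is_block_partition (N B : nat) (blk : nat -> nat) : Prop :=
  (forall i, (i < N)%nat -> (blk i < B)%nat) /\
  (forall b, (b < B)%nat -> exists i, (i < N)%nat /\ blk i = b).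

Definition blockv (N : nat) (blk : nat -> nat) (x : nat -> R) (b : nat) : nat -> R :=
  fun i => if andb (Nat.ltb i N) (Nat.eqb (blk i) b) then x i else 0.

Definition restrS (N : nat) (blk : nat -> nat) (x : nat -> R) (S : list nat) : nat -> R :=
  fun i => if andb (Nat.ltb i N) (existsb (Nat.eqb (blk i)) S) then x i else 0.

Definition is_block_norm (N B : nat) (blk : nat -> nat) (nrm : nat -> (nat -> R) -> R) : Prop :=
  forall b, (b < B)%nat ->
    (forall u, nrm b (blockv N blk u b) = 0 <-> (forall i, blockv N blk u b i = 0)) /\
    (forall c u, nrm b (blockv N blk (fun i => c * u i) b) = Rabs c * nrm b (blockv N blk u b)) /\
    (forall u v, nrm b (blockv N blk (fun i => u i + v i) b)
                 <= nrm b (blockv N blk u b) + nrm b (blockv N blk v b)).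

Definition bnorm (N : nat) (blk : nat -> nat) (nrm : nat -> (nat -> R) -> R)
  (x : nat -> R) (b : nat) : R := nrm b (blockv N blk x b).

(* real power with 0^a = 0 (used only for a > 0 or a positive base) *)
Definition rpow (a e : R) : R := if Rle_dec a 0 then 0 else Rpower a e.

Definition sumL (l : list nat) (f : nat -> R) : R := fold_right Rplus 0 (map f l).

Definition winf (B : nat) (w : nat -> R) : R := fold_right Rmax 0 (map w (seq 0 B)).

Definition wnorm (N B : nat) (blk : nat -> nat) (nrm : nat -> (nat -> R) -> R)
  (w : nat -> R) (p : R) (x : nat -> R) : R :=
  rpow (sumL (seq 0 B) (fun b => rpow (w b) (2 - p) * rpow (bnorm N blk nrm x b) p)) (1 / p).

Definition blocknz (N : nat) (blk : nat -> nat) (z : nat -> R) (b : nat) : bool :=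
  existsb (fun i => andb (Nat.eqb (blk i) b) (if Req_EM_T (z i) 0 then false else true))
          (seq 0 N).

Definition wsparsity (N B : nat) (blk : nat -> nat) (w : nat -> R) (z : nat -> R) : R :=
  sumL (seq 0 B) (fun b => if blocknz N blk z b then (w b) ^ 2 else 0).

(* infimum of a set of reals (0 if it has no greatest lower bound) *)
Definition is_inf (E : R -> Prop) (m : R) : Prop :=
  (forall y, E y -> m <= y) /\ (forall m', (forall y, E y -> m' <= y) -> m' <= m).

Definition Rinf (E : R -> Prop) : R :=
  match excluded_middle_informative (exists m, is_inf E m) with
  | left H => proj1_sig (constructive_indefinite_description _ H)
  | right _ => 0
  end.

Definition sigma_s (N B : nat) (blk : nat -> nat) (nrm : nat -> (nat -> R) -> R)
  (w : nat -> R) (p s : R) (x : nat -> R) : R :=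
  Rinf (fun y => exists z : nat -> R, wsparsity N B blk w z <= s /\
                  y = wnorm N B blk nrm w p (fun i => x i - z i)).

(* pi (given as the list [pi(1); ...; pi(B)]) is a permutation of the blocks
   sorted so that ||x[pi(i)]||_r / omega_pi(i) is nonincreasing *)
Definition sorted_perm (N B : nat) (blk : nat -> nat) (nrm : nat -> (nat -> R) -> R)
  (w : nat -> R) (x : nat -> R) (pi : list nat) : Prop :=
  Permutation pi (seq 0 B) /\
  (forall i j, (i < j)%nat -> (j < B)%nat ->
     bnorm N blk nrm x (nth j pi 0%nat) / w (nth j pi 0%nat)
     <= bnorm N blk nrm x (nth i pi 0%nat) / w (nth i pi 0%nat)).

Definition is_ks (B : nat) (w : nat -> R) (pi : list nat) (s : R) (k : nat) : Prop :=
  (k <= B)%nat /\ sumL (firstn k pi) (fun b => (w b) ^ 2) <= s /\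
  (forall k', (k' <= B)%nat -> sumL (firstn k' pi) (fun b => (w b) ^ 2) <= s -> (k' <= k)%nat).

Definition tsigma_s (N B : nat) (blk : nat -> nat) (nrm : nat -> (nat -> R) -> R)
  (w : nat -> R) (p : R) (x : nat -> R) (pi : list nat) (k : nat) : R :=
  wnorm N B blk nrm w p (fun i => x i - restrS N blk x (firstn k pi) i).

(* Main.v *)
Require Import Defs.
From Stdlib Require Import Reals List Permutation Lra Lia FunctionalExtensionality ClassicalEpsilon.
Open Scope R_scope.

Lemma exp_le_mono a b : a <= b -> exp a <= exp b.
Proof. intros [H|H]; [left; apply exp_increasing; auto| subst; lra]. Qed.

Lemma ln_le_mono a b : 0 < a -> a <= b -> ln a <= ln b.
Proof. intros Ha [H|H]; [left; apply ln_increasing; auto| subst; lra]. Qed.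

Lemma exp_le_inv a b : exp a <= exp b -> a <= b.
Proof. intros H. destruct (Rle_dec a b); auto. assert (b < a) by lra.
  apply exp_increasing in H0. lra. Qed.

Lemma rpow_ge0 a e : 0 <= rpow a e.
Proof. unfold rpow, Rpower. destruct (Rle_dec a 0); [lra|]. left; apply exp_pos. Qed.

Lemma rpow_0 e : rpow 0 e = 0.
Proof. unfold rpow. destruct (Rle_dec 0 0); lra. Qed.

Lemma rpow_pos a e : 0 < a -> rpow a e = exp (e * ln a).
Proof. intros H. unfold rpow. destruct (Rle_dec a 0); [lra|reflexivity]. Qed.

Lemma rpow_le a b e : 0 <= a -> a <= b -> 0 < e -> rpow a e <= rpow b e.
Proof. intros Ha Hab He. destruct Ha as [Ha|Ha].
  - rewrite !rpow_pos by lra. apply exp_le_mono. apply Rmult_le_compat_l; [lra|].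
    apply ln_le_mono; lra.
  - subst. rewrite rpow_0. apply rpow_ge0. Qed.

Lemma sumL_app l1 l2 f : sumL (l1 ++ l2) f = sumL l1 f + sumL l2 f.
Proof. induction l1; unfold sumL in *; simpl; [lra|]. rewrite IHl1; lra. Qed.

Lemma sumL_ext l f g : (forall b, In b l -> f b = g b) -> sumL l f = sumL l g.
Proof. induction l; intros H; unfold sumL in *; simpl; auto.
  rewrite H by (left; auto). rewrite IHl; auto. intros; apply H; right; auto. Qed.

Lemma sumL_le l f g : (forall b, In b l -> f b <= g b) -> sumL l f <= sumL l g.
Proof. induction l; intros H; unfold sumL in *; simpl; [lra|].
  assert (f a <= g a) by (apply H; left; auto).
  assert (fold_right Rplus 0 (map f l) <= fold_right Rplus 0 (map g l)) by (apply IHl; intros; apply H; right; auto).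
  lra. Qed.

Lemma sumL_ge0 l f : (forall b, In b l -> 0 <= f b) -> 0 <= sumL l f.
Proof. intros H. replace 0 with (sumL l (fun _ => 0)).
  apply sumL_le; auto. clear H. induction l; unfold sumL in *; simpl; auto. rewrite IHl; lra. Qed.

Lemma sumL_zero l f : (forall b, In b l -> f b = 0) -> sumL l f = 0.
Proof. intros H. transitivity (sumL l (fun _ => 0)). apply sumL_ext; auto.
  clear H. induction l; unfold sumL in *; simpl; auto. rewrite IHl; lra. Qed.

Lemma sumL_scal l k f : sumL l (fun b => k * f b) = k * sumL l f.
Proof. induction l; unfold sumL in *; simpl; [lra|]. rewrite IHl; lra. Qed.

Lemma sumL_perm l l' f : Permutation l l' -> sumL l f = sumL l' f.
Proof. intros H; induction H; unfold sumL in *; simpl; try lra. Qed.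

Lemma key (S T : list nat) (c a : nat -> R) (p q D m : R) :
  0 < q -> q < p -> 0 < D ->
  (forall b, In b (S ++ T) -> 0 < c b /\ 0 <= a b) ->
  (forall t, In t T -> a t <= m) -> (forall j, In j S -> m <= a j) -> 0 <= m ->
  D <= sumL S c ->
  rpow (sumL T (fun b => c b * rpow (a b) p)) (1/p)
  <= rpow D (1/p - 1/q) * rpow (sumL (S ++ T) (fun b => c b * rpow (a b) q)) (1/q).
Proof.
  intros Hq Hqp HD Hca HT HS Hm HDS.
  set (Q := sumL (S ++ T) (fun b => c b * rpow (a b) q)).
  set (L := sumL T (fun b => c b * rpow (a b) p)).
  assert (HinS : forall b, In b S -> In b (S ++ T)) by (intros; apply in_or_app; auto).
  assert (HinT : forall b, In b T -> In b (S ++ T)) by (intros; apply in_or_app; auto).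
  assert (H1 : D * rpow m q <= Q).
  { unfold Q. rewrite sumL_app.
    assert (0 <= sumL T (fun b => c b * rpow (a b) q)).
    { apply sumL_ge0; intros b Hb. destruct (Hca b (HinT b Hb)).
      pose proof (rpow_ge0 (a b) q). nra. }
    assert (D * rpow m q <= sumL S c * rpow m q) by (pose proof (rpow_ge0 m q); nra).
    assert (sumL S c * rpow m q <= sumL S (fun b => c b * rpow (a b) q)).
    { rewrite Rmult_comm, <- sumL_scal. apply sumL_le; intros b Hb.
      destruct (Hca b (HinS b Hb)). pose proof (rpow_le m (a b) q Hm (HS b Hb) Hq). nra. }
    lra. }
  assert (H2 : L <= rpow m (p - q) * Q).
  { apply Rle_trans with (sumL T (fun b => rpow m (p - q) * (c b * rpow (a b) q))).
    - apply sumL_le; intros b Hb. destruct (Hca b (HinT b Hb)) as [Hc Ha].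
      pose proof (HT b Hb).
      destruct Ha as [Ha|Ha].
      + rewrite !rpow_pos by lra.
        replace (p * ln (a b)) with (q * ln (a b) + (p - q) * ln (a b)) by ring.
        rewrite exp_plus.
        assert (exp ((p - q) * ln (a b)) <= exp ((p - q) * ln m)).
        { apply exp_le_mono. apply Rmult_le_compat_l; [lra|]. apply ln_le_mono; lra. }
        pose proof (exp_pos (q * ln (a b))).
        replace (exp ((p - q) * ln m) * (c b * exp (q * ln (a b)))) with ((c b * exp (q * ln (a b))) * exp ((p - q) * ln m)) by ring.
        rewrite <- Rmult_assoc. apply Rmult_le_compat_l; nra.
      + rewrite <- Ha, !rpow_0. pose proof (rpow_ge0 m (p-q)). nra.
    - rewrite sumL_scal. apply Rmult_le_compat_l; [apply rpow_ge0|].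
      unfold Q. rewrite sumL_app.
      assert (0 <= sumL S (fun b => c b * rpow (a b) q)).
      { apply sumL_ge0; intros b Hb. destruct (Hca b (HinS b Hb)).
        pose proof (rpow_ge0 (a b) q). nra. }
      lra. }
  assert (HL0 : 0 <= L).
  { apply sumL_ge0; intros b Hb. destruct (Hca b (HinT b Hb)).
    pose proof (rpow_ge0 (a b) p). nra. }
  assert (HR0 : 0 <= rpow D (1/p - 1/q) * rpow Q (1/q)).
  { pose proof (rpow_ge0 D (1/p-1/q)); pose proof (rpow_ge0 Q (1/q)); nra. }
  fold L Q.
  destruct HL0 as [HL0|HL0]; [|rewrite <- HL0, rpow_0; auto].
  destruct Hm as [Hm|Hm]; [|rewrite <- Hm, rpow_0 in H2; lra].
  assert (HQ : 0 < Q) by (rewrite rpow_pos in H2 by lra; pose proof (exp_pos ((p-q) * ln m)); nra).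
  rewrite !rpow_pos by lra. rewrite rpow_pos in H1, H2 by lra.
  rewrite <- exp_plus. apply exp_le_mono.
  assert (E1 : ln D + q * ln m <= ln Q).
  { rewrite <- (ln_exp (q * ln m)), <- ln_mult by (auto; apply exp_pos).
    apply ln_le_mono; auto. pose proof (exp_pos (q * ln m)); nra. }
  assert (E2 : ln L <= (p - q) * ln m + ln Q).
  { rewrite <- (ln_exp ((p - q) * ln m)), <- ln_mult by (auto; apply exp_pos).
    apply ln_le_mono; auto. }
  set (lL := ln L) in *. set (lD := ln D) in *. set (lQ := ln Q) in *. set (u := ln m) in *.
  assert (E3 : (p - q) * (q * u) <= (p - q) * (lQ - lD)) by (apply Rmult_le_compat_l; lra).
  assert (E4 : q * lL <= q * ((p - q) * u + lQ)) by (apply Rmult_le_compat_l; lra).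
  assert (E5 : q * lL <= (q - p) * lD + p * lQ) by nra.
  apply Rmult_le_reg_l with (p * q). nra.
  replace (p * q * (1 / p * lL)) with (q * lL) by (field; lra).
  replace (p * q * ((1 / p - 1 / q) * lD + 1 / q * lQ)) with ((q - p) * lD + p * lQ) by (field; lra).
  exact E5.
Qed.

Lemma Rinf_le (E : R -> Prop) y0 : E y0 -> (forall y, E y -> 0 <= y) -> Rinf E <= y0.
Proof.
  intros Hy0 H0. unfold Rinf. destruct (excluded_middle_informative _) as [H|H].
  - destruct (constructive_indefinite_description _ H) as [m [Hm1 Hm2]]. simpl. apply Hm1; auto.
  - exfalso. apply H. set (E' := fun y => E (-y)). destruct (completeness E') as [m Hm].
    + exists 0. intros y Hy. unfold E' in Hy. specialize (H0 _ Hy). lra.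
    + exists (-y0). unfold E'. rewrite Ropp_involutive. auto.
    + exists (-m). split.
      * intros y Hy. destruct Hm as [Hm _].
        assert (-y <= m) by (apply Hm; unfold E'; rewrite Ropp_involutive; auto). lra.
      * intros m' Hm'. destruct Hm as [_ Hm]. assert (m <= -m').
        { apply Hm. intros y Hy. unfold E' in Hy. specialize (Hm' _ Hy). lra. } lra.
Qed.

Lemma existsb_In b S : existsb (Nat.eqb b) S = true <-> In b S.
Proof. rewrite existsb_exists. split.
  - intros [y [Hy Hb]]. apply Nat.eqb_eq in Hb. subst; auto.
  - intros H. exists b. split; auto. apply Nat.eqb_refl. Qed.

Lemma NoDup_disj (l1 l2 : list nat) b : NoDup (l1 ++ l2) -> In b l1 -> ~ In b l2.
Proof. induction l1; simpl; intros H Hb; [contradiction|].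
  inversion H; subst. destruct Hb as [Hb|Hb].
  - subst. intros Hc. apply H2. apply in_or_app; auto.
  - apply IHl1; auto. Qed.

Lemma winf_ge B w b : (b < B)%nat -> w b <= winf B w.
Proof. unfold winf. intros Hb. assert (In (w b) (map w (seq 0 B))).
  { apply in_map. apply in_seq. lia. }
  revert H. generalize (map w (seq 0 B)). induction l; simpl; intros H; [contradiction|].
  destruct H as [H|H]. subst. apply Rmax_l. eapply Rle_trans; [apply IHl; auto|apply Rmax_r]. Qed.

Lemma winf_ge0 B w : 0 <= winf B w.
Proof. unfold winf. generalize (map w (seq 0 B)). induction l; simpl. lra.
  eapply Rle_trans; [apply IHl|apply Rmax_r]. Qed.

Lemma bnorm_ge0 N B blk nrm x b : is_block_norm N B blk nrm -> (b < B)%nat ->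
  0 <= bnorm N blk nrm x b.
Proof. intros H Hb. destruct (H b Hb) as [H1 [H2 H3]]. unfold bnorm.
  specialize (H3 x (fun i => -1 * x i)). specialize (H2 (-1) x).
  rewrite H2 in H3. replace (Rabs (-1)) with 1 in H3 by (rewrite Rabs_left; lra).
  assert (nrm b (blockv N blk (fun i => x i + -1 * x i) b) = 0).
  { apply H1. intros i. unfold blockv. destruct (andb _ _); lra. }
  lra. Qed.

Lemma term_eq (wb n e : R) : 1 <= wb -> 0 <= n ->
  rpow wb (2 - e) * rpow n e = wb ^ 2 * rpow (n / wb) e.
Proof. intros Hw Hn. destruct Hn as [Hn|Hn].
  - rewrite !rpow_pos by (try apply Rdiv_lt_0_compat; lra).
    unfold Rdiv. rewrite ln_mult by (try apply Rinv_0_lt_compat; lra).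
    rewrite ln_Rinv by lra.
    rewrite <- (exp_ln (wb ^ 2)) by (apply pow_lt; lra).
    rewrite ln_pow by lra. rewrite <- !exp_plus. f_equal. simpl INR. ring.
  - subst. unfold Rdiv. rewrite Rmult_0_l, rpow_0. ring. Qed.

Theorem mainTheorem1
  (N B : nat) (blk : nat -> nat) (nrm : nat -> (nat -> R) -> R) (w : nat -> R)
  (x : nat -> R) (p q s : R) (pi : list nat) (k : nat)
  (Hpart : is_block_partition N B blk)
  (Hnrm : is_block_norm N B blk nrm)
  (Hw : forall b, (b < B)%nat -> 1 <= w b)
  (Hs : (winf B w) ^ 2 < s)
  (Hq : 0 < q) (Hqp : q < p) (Hp2 : p <= 2)
  (Hpi : sorted_perm N B blk nrm w x pi)
  (Hk : is_ks B w pi s k) :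
  sigma_s N B blk nrm w p s x <= tsigma_s N B blk nrm w p x pi k /\
  tsigma_s N B blk nrm w p x pi k
    <= rpow (s - (winf B w) ^ 2) (1 / p - 1 / q) * wnorm N B blk nrm w q x.
Proof.
  destruct Hpi as [Hperm Hsort]. destruct Hk as [HkB [HkS Hkmax]].
  assert (Hlen : length pi = B) by (rewrite (Permutation_length Hperm), length_seq; auto).
  assert (HND : NoDup pi) by (apply (Permutation_NoDup (Permutation_sym Hperm)), seq_NoDup).
  assert (Hin : forall b, In b pi -> (b < B)%nat).
  { intros b Hb. apply (Permutation_in _ Hperm), in_seq in Hb. lia. }
  set (S := firstn k pi). set (T := skipn k pi).
  assert (HST : pi = S ++ T) by (symmetry; apply firstn_skipn).
  assert (HlenS : length S = k) by (unfold S; rewrite length_firstn; lia).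
  assert (HinS : forall b, In b S -> In b pi) by (intros; rewrite HST; apply in_or_app; auto).
  assert (HinT : forall b, In b T -> In b pi) by (intros; rewrite HST; apply in_or_app; auto).
  assert (Hdisj : forall b, In b S -> ~ In b T) by (intros b; apply NoDup_disj; rewrite <- HST; auto).
  assert (HPST : Permutation (seq 0 B) (S ++ T)) by (rewrite <- HST; apply Permutation_sym; auto).
  set (c := fun b => (w b) ^ 2).
  set (a := fun b => bnorm N blk nrm x b / w b).
  assert (Htsig : tsigma_s N B blk nrm w p x pi k = rpow (sumL T (fun b => c b * rpow (a b) p)) (1/p)).
  { unfold tsigma_s, wnorm. f_equal. rewrite (sumL_perm _ _ _ HPST), sumL_app.
    rewrite sumL_zero.
    2:{ intros b Hb. assert (Hb' : (b < B)%nat) by auto.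
        replace (bnorm N blk nrm (fun i => x i - restrS N blk x (firstn k pi) i) b) with 0.
        rewrite rpow_0; ring. symmetry. unfold bnorm.
        apply (proj1 (Hnrm b Hb')). intros i. unfold blockv, restrS.
        destruct (Nat.ltb i N); simpl; [|reflexivity].
        destruct (Nat.eqb (blk i) b) eqn:E; [|reflexivity].
        apply Nat.eqb_eq in E. rewrite E. fold S. rewrite (proj2 (existsb_In b S) Hb). ring. }
    rewrite Rplus_0_l. apply sumL_ext. intros b Hb.
    assert (Hb' : (b < B)%nat) by auto.
    replace (bnorm N blk nrm (fun i => x i - restrS N blk x (firstn k pi) i) b) with (bnorm N blk nrm x b).
    apply term_eq; auto. apply bnorm_ge0 with B; auto.
    unfold bnorm. f_equal. apply functional_extensionality. intros i. unfold blockv, restrS.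
    destruct (Nat.ltb i N); simpl; [|reflexivity].
    destruct (Nat.eqb (blk i) b) eqn:E; [|reflexivity].
    apply Nat.eqb_eq in E. rewrite E. fold S.
    destruct (existsb (Nat.eqb b) S) eqn:E2; [|ring].
    exfalso. apply (Hdisj b); auto. apply existsb_In; auto. }
  split.
  -
    unfold sigma_s. apply Rinf_le.
    + exists (restrS N blk x S). split; [|reflexivity].
      unfold wsparsity.
      apply Rle_trans with (sumL (seq 0 B) (fun b => if in_dec Nat.eq_dec b S then w b ^ 2 else 0)).
      * apply sumL_le. intros b Hb. destruct (blocknz N blk (restrS N blk x S) b) eqn:E.
        -- unfold blocknz in E. apply existsb_exists in E. destruct E as [i [Hi E]].
           apply andb_prop in E. destruct E as [E1 E2]. apply Nat.eqb_eq in E1.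
           destruct (Req_EM_T (restrS N blk x S i) 0) as [|Hz]; [discriminate|].
           unfold restrS in Hz. destruct (andb (Nat.ltb i N) (existsb (Nat.eqb (blk i)) S)) eqn:E3; [|lra].
           apply andb_prop in E3. destruct E3 as [_ E3]. rewrite E1 in E3. apply existsb_In in E3.
           destruct (in_dec Nat.eq_dec b S); [lra|contradiction].
        -- destruct (in_dec Nat.eq_dec b S); [|lra]. pose proof (pow2_ge_0 (w b)). lra.
      * rewrite (sumL_perm _ _ _ HPST), sumL_app.
        rewrite (sumL_zero T). 2:{ intros b Hb. destruct (in_dec Nat.eq_dec b S); auto.
          exfalso; apply (Hdisj b); auto. }
        rewrite Rplus_0_r. rewrite (sumL_ext S _ (fun b => w b ^ 2)).
        exact HkS. intros b Hb. destruct (in_dec Nat.eq_dec b S); auto; contradiction.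
    + intros y [z [_ Hy]]. subst y. unfold wnorm. apply rpow_ge0.
  - rewrite Htsig.
    assert (Hwn : wnorm N B blk nrm w q x = rpow (sumL (S ++ T) (fun b => c b * rpow (a b) q)) (1/q)).
    { unfold wnorm. f_equal. rewrite (sumL_perm _ _ _ HPST). apply sumL_ext.
      intros b Hb. rewrite <- HST in Hb. apply term_eq; auto. apply bnorm_ge0 with B; auto. }
    rewrite Hwn.
    destruct T as [|t0 T'] eqn:ET.
    + unfold sumL at 1. simpl map. simpl fold_right. rewrite rpow_0.
      apply Rmult_le_pos; apply rpow_ge0.
    + assert (HkB' : (k < B)%nat).
      { rewrite <- Hlen, HST, length_app, HlenS. simpl. lia. }
      assert (Ht0 : t0 = nth k pi 0%nat).
      { replace t0 with (nth 0 T 0%nat) by (rewrite ET; reflexivity). unfold T.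
        rewrite nth_skipn. f_equal; lia. }
      assert (Hpos : forall b, In b (S ++ t0 :: T') -> 0 < c b /\ 0 <= a b).
      { intros b Hb. assert (Hb' : (b < B)%nat).
        { apply Hin. apply in_app_or in Hb. destruct Hb as [Hb|Hb]; [apply HinS|apply HinT]; auto. }
        pose proof (Hw b Hb'). unfold c, a. split. apply pow_lt; lra.
        unfold Rdiv; apply Rmult_le_pos; [apply bnorm_ge0 with B; auto|left; apply Rinv_0_lt_compat; lra]. }
      apply key with (a t0).
      * lra.
      * lra.
      * lra.
      * exact Hpos.
      * intros t Ht. rewrite <- ET in Ht. destruct (In_nth _ _ 0%nat Ht) as [i [Hi Hti]].
        unfold T in Hti. rewrite nth_skipn in Hti. subst t.
        rewrite Ht0. unfold a.
        destruct i as [|i]. { rewrite Nat.add_0_r. lra. }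
        apply Hsort. lia. rewrite ET in Hi.
        assert (length pi = length S + length (t0 :: T'))%nat by (rewrite HST at 1; apply length_app).
        lia.
      * intros j Hj. destruct (In_nth _ _ 0%nat Hj) as [i [Hi Hji]].
        unfold S in Hji. rewrite nth_firstn in Hji. rewrite HlenS in Hi.
        destruct (Nat.ltb_spec i k); [|lia]. subst j. rewrite Ht0. unfold a.
        apply Hsort; lia.
      * assert (In t0 (S ++ t0 :: T')) by (apply in_or_app; right; left; auto).
        apply Hpos; auto.
      * assert (Hlt : s < sumL (firstn (k + 1) pi) (fun b => w b ^ 2)).
        { destruct (Rlt_le_dec s (sumL (firstn (k + 1) pi) (fun b => w b ^ 2))) as [H|H]; auto.
          apply Hkmax in H; lia. }
        rewrite HST, <- HlenS, firstn_app_2 in Hlt. simpl firstn in Hlt.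
        rewrite sumL_app in Hlt. unfold sumL at 2 in Hlt. simpl map in Hlt. simpl fold_right in Hlt.
        assert (Ht0B : (t0 < B)%nat) by (apply Hin; apply HinT; left; auto).
        pose proof (winf_ge B w t0 Ht0B). pose proof (Hw t0 Ht0B).
        assert (w t0 ^ 2 <= winf B w ^ 2) by (simpl; nra).
        assert (sumL S c = sumL S (fun b => w b ^ 2)) by reflexivity.
        replace (w t0 * (w t0 * 1)) with (w t0 ^ 2) in Hlt by ring. lra.
Qed.
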